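(* Let $0<p<1$ and let $\{a_n\}_{n\geq 0}$ be a sequence of non-negative real numbers such that $\{a^p_n\}_{n\geq 0}$ converges to a finite limit $a\in\mathbb{R}$. Then $\left\{\frac{1}{n+1}a^y_n(p)\right\}_{n\geq 0}$ converges to $0$, where $$a^y_n(p)=\sum_{i=\lfloor pn-\epsilon(n)\rfloor+1}^{\lfloor pn+\epsilon(n)\rfloor-1}w_n^i(p)\, a_i.$$
   Context: $a^p_n=\sum_{i=0}^n\binom{n}{i}p^i(1-p)^{n-i}a_i$. For $0<p<1$, $n\in\mathbb{N}$ and integer $i\ge0$, $w_n^i(p)=\sum_{j=i}^n\binom{j}{i}p^i(1-p)^{j-i}$ (an empty sum, i.e. $0$, if $i>n$). $\epsilon(n)=\sqrt{n}\log n$ for $n\geq2$ and $\epsilon(n)=1$ otherwise. *)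

(* Defs.v *)
From Stdlib Require Import Reals ZArith.
From Coquelicot Require Import Coquelicot.
Open Scope R_scope.

Definition bern_transform (p : R) (a : nat -> R) (n : nat) : R :=
  sum_f_R0 (fun i => Binomial.C n i * p ^ i * (1 - p) ^ (n - i) * a i) n.

Definition w (n i : nat) (p : R) : R :=
  sum_f_R0 (fun j => if Nat.leb i j then Binomial.C j i * p ^ i * (1 - p) ^ (j - i) else 0) n.

Definition eps (n : nat) : R :=
  if Nat.leb 2 n then sqrt (INR n) * ln (INR n) else 1.

(* a^y_n(p) = sum over integers i with floor(pn - eps n) + 1 <= i <= floor(pn + eps n) - 1
   of w_n^i(p) a_i; only indices i >= 0 (where a_i and w_n^i are defined) are summed. *)
Definition a_y (p : R) (a : nat -> R) (n : nat) : R :=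
  let lo := (floor (p * INR n - eps n) + 1)%Z in
  let hi := (floor (p * INR n + eps n) - 1)%Z in
  sum_f_R0 (fun i => if (Z.leb lo (Z.of_nat i) && Z.leb (Z.of_nat i) hi)%bool
                     then w n i p * a i else 0) (Z.to_nat hi).

(* Main.v *)
Require Import Defs.
From Stdlib Require Import Reals ZArith Lra Lia.
From Coquelicot Require Import Coquelicot.
Open Scope R_scope.

Lemma C_n0 n : Binomial.C n 0 = 1.
Proof. unfold Binomial.C. rewrite Nat.sub_0_r. simpl. field. apply INR_fact_neq_0. Qed.
Lemma C_nn n : Binomial.C n n = 1.
Proof. unfold Binomial.C. rewrite Nat.sub_diag. simpl. field. apply INR_fact_neq_0. Qed.
Lemma C_ge0 n k : 0 <= Binomial.C n k.
Proof. unfold Binomial.C. apply Rle_mult_inv_pos. apply pos_INR.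
  apply Rmult_lt_0_compat; apply lt_0_INR, lt_O_fact. Qed.

Definition E (p : R) (N : nat) (f : nat -> R) :=
  sum_f_R0 (fun k => Binomial.C N k * p ^ k * (1 - p) ^ (N - k) * f k) N.

Lemma E_rec p N f : E p (S N) f = (1-p) * E p N f + p * E p N (fun k => f (S k)).
Proof.
  unfold E. rewrite decomp_sum by lia. simpl pred.
  destruct N as [|M].
  - simpl. rewrite !C_n0, C_nn. ring.
  - rewrite (decomp_sum (fun k => Binomial.C (S M) k * p ^ k * (1 - p) ^ (S M - k) * f k)) by lia.
    simpl pred. cbn [sum_f_R0].
    rewrite !C_n0, !C_nn.
    replace (sum_f_R0 (fun i : nat => Binomial.C (S (S M)) (S i) * p ^ S i * (1 - p) ^ (S (S M) - S i) * f (S i)) M)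
      with (sum_f_R0 (fun i => (Binomial.C (S M) (S i) * p ^ S i * (1 - p) ^ (S M - S i) * f (S i)) * (1-p))  M
           + sum_f_R0 (fun i => (Binomial.C (S M) i * p ^ i * (1 - p) ^ (S M - i) * f (S i)) * p) M).
    2:{ rewrite <- sum_plus. apply sum_eq. intros i Hi. rewrite <- (pascal (S M) i) by lia.
        replace (S (S M) - S i)%nat with (S (M - i)) by lia.
        replace (S M - i)%nat with (S (M - i)) by lia.
        replace (S M - S i)%nat with (M - i)%nat by lia. simpl. ring. }
    rewrite <- !scal_sum.
    rewrite !Nat.sub_diag, !Nat.sub_0_r. simpl. ring.
Qed.

Lemma E_ext p N f g : (forall k, (k <= N)%nat -> f k = g k) -> E p N f = E p N g.
Proof. intros H. unfold E. apply sum_eq. intros i Hi. rewrite H by lia. reflexivity. Qed.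

Lemma E_lin p N a b f g : E p N (fun k => a * f k + b * g k) = a * E p N f + b * E p N g.
Proof. unfold E. rewrite !scal_sum, <- sum_plus. apply sum_eq. intros; ring. Qed.

Lemma E_mono p N f g : 0 <= p <= 1 -> (forall k, (k <= N)%nat -> f k <= g k) -> E p N f <= E p N g.
Proof. intros Hp H. unfold E. apply sum_Rle. intros i Hi. apply Rmult_le_compat_l.
  2: now apply H.
  apply Rmult_le_pos; [apply Rmult_le_pos|]; [apply C_ge0| apply pow_le; lra | apply pow_le; lra]. Qed.

Lemma E_poly p N : forall a b c,
  E p N (fun k => a + b * INR k + c * INR k ^ 2) =
  a + b * (INR N * p) + c * (INR N * p * (1-p) + (INR N * p)^2).
Proof.
  induction N as [|N IH]; intros a b c.
  - unfold E. simpl. rewrite C_n0. ring.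
  - rewrite E_rec.
    rewrite (E_ext p N (fun k => a + b * INR (S k) + c * INR (S k) ^ 2)
               (fun k => (a+b+c) + (b + 2*c) * INR k + c * INR k ^ 2)).
    2:{ intros k _. rewrite S_INR. ring. }
    rewrite !IH. rewrite S_INR. ring.
Qed.

Lemma E_one p N : E p N (fun _ => 1) = 1.
Proof.
  rewrite (E_ext p N _ (fun k => 1 + 0 * INR k + 0 * INR k ^ 2)) by (intros; ring).
  rewrite E_poly. ring. Qed.

Lemma E_cheb p N (f : nat -> R) t : 0 < p < 1 -> 0 < t ->
  (forall k, (k <= N)%nat -> 0 <= f k) ->
  (forall k, (k <= N)%nat -> f k <> 0 -> f k <= 1 /\ t <= Rabs (INR k - INR N * p)) ->
  E p N f <= INR N / (4 * t ^ 2).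
Proof.
  intros Hp Ht H0 H1.
  apply Rle_trans with (E p N (fun k => (INR N * p)^2 / t^2 + (- 2 * INR N * p / t^2) * INR k + (/ t^2) * INR k ^ 2)).
  - apply E_mono. lra. intros k Hk.
    destruct (Req_dec (f k) 0) as [E0|E0].
    + rewrite E0. replace ((INR N * p)^2 / t^2 + (- 2 * INR N * p / t^2) * INR k + (/ t^2) * INR k ^ 2)
        with ((INR k - INR N * p)^2 / t^2) by (field; lra).
      apply Rmult_le_pos. apply pow2_ge_0. apply Rlt_le, Rinv_0_lt_compat. nra.
    + destruct (H1 k Hk E0) as [Hf Ha].
      replace ((INR N * p)^2 / t^2 + (- 2 * INR N * p / t^2) * INR k + (/ t^2) * INR k ^ 2)
        with ((INR k - INR N * p)^2 / t^2) by (field; lra).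
      apply Rle_trans with 1; auto.
      assert (t^2 <= (INR k - INR N * p)^2).
      { revert Ha. unfold Rabs. destruct (Rcase_abs (INR k - INR N * p)); intros; nra. }
      assert (0 < t^2) by (apply pow_lt; lra). apply (Rmult_le_reg_r (t^2)). lra. unfold Rdiv. rewrite Rmult_assoc, Rinv_l by lra. lra.
  - rewrite E_poly. pose proof (pos_INR N).
    assert (p * (1-p) <= /4) by (pose proof (pow2_ge_0 (p - /2)); nra).
    replace ((INR N * p) ^ 2 / t ^ 2 + - 2 * INR N * p / t ^ 2 * (INR N * p) +
      / t ^ 2 * (INR N * p * (1 - p) + (INR N * p) ^ 2)) with (INR N * (p * (1-p)) / t^2) by (field; lra).
    unfold Rdiv. rewrite Rinv_mult. rewrite <- (Rmult_assoc (INR N) (/ 4)).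
    apply Rmult_le_compat_r. apply Rlt_le, Rinv_0_lt_compat, pow_lt; lra.
    apply Rmult_le_compat_l; lra.
Qed.

Lemma sum_delta (g : nat -> R) i M :
  sum_f_R0 (fun k => if Nat.eqb k i then g k else 0) M = if Nat.leb i M then g i else 0.
Proof.
  induction M as [|M IH].
  - simpl. destruct i; simpl; auto.
  - rewrite tech5, IH.
    destruct (Nat.leb_spec i M); destruct (Nat.leb_spec i (S M)); destruct (Nat.eqb_spec (S M) i);
      try lia; subst; try ring.
Qed.

Lemma E_delta p M i : E p M (fun k => if Nat.eqb k i then 1 else 0) =
  if Nat.leb i M then Binomial.C M i * p ^ i * (1-p) ^ (M - i) else 0.
Proof.
  unfold E. rewrite <- (sum_delta (fun k => Binomial.C M k * p ^ k * (1-p) ^ (M - k))).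
  apply sum_eq. intros k _. destruct (Nat.eqb k i); ring.
Qed.

Lemma pw p N i : p * w N i p = E p (S N) (fun k => if Nat.leb (S i) k then 1 else 0).
Proof.
  induction N as [|N IH].
  - unfold w, E. simpl. destruct i as [|i].
    + simpl. rewrite C_n0, (C_nn 1). ring.
    + simpl. destruct i; simpl; ring.
  - assert (Hw : w (S N) i p = w N i p + (if Nat.leb i (S N) then Binomial.C (S N) i * p ^ i * (1 - p) ^ (S N - i) else 0)) by reflexivity.
    rewrite Hw, E_rec.
    rewrite (E_ext p (S N) (fun k => if Nat.leb (S i) (S k) then 1 else 0)
      (fun k => 1 * (if Nat.leb (S i) k then 1 else 0) + 1 * (if Nat.eqb k i then 1 else 0))).
    2:{ intros k _. change (Nat.leb (S i) (S k)) with (Nat.leb i k). destruct (Nat.leb_spec i k); destruct (Nat.leb_spec (S i) k);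
        destruct (Nat.eqb_spec k i); try lia; ring. }
    rewrite E_lin, E_delta, <- IH. ring.
Qed.

Lemma w_zero N i p : (N < i)%nat -> w N i p = 0.
Proof. intros H. unfold w. apply sum_eq_R0. intros j Hj.
  destruct (Nat.leb_spec i j); [lia|reflexivity]. Qed.

Lemma T_id p a N : sum_f_R0 (bern_transform p a) N = sum_f_R0 (fun i => w N i p * a i) N.
Proof.
  induction N as [|N IH].
  - unfold bern_transform, w. simpl. ring.
  - rewrite tech5, IH.
    assert (Hw : forall i, w (S N) i p = w N i p + (if Nat.leb i (S N) then Binomial.C (S N) i * p ^ i * (1 - p) ^ (S N - i) else 0)) by reflexivity.
    rewrite (sum_eq (fun i => w (S N) i p * a i) (fun i => w N i p * a i + Binomial.C (S N) i * p ^ i * (1 - p) ^ (S N - i) * a i) (S N)).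
    2:{ intros i Hi. rewrite Hw. destruct (Nat.leb_spec i (S N)); [|lia]. ring. }
    rewrite sum_plus, tech5. unfold bern_transform.
    rewrite (w_zero N (S N)) by lia. ring.
Qed.

Lemma w_term_nonneg p (N : nat) i j : 0 < p < 1 ->
  0 <= (if Nat.leb i j then Binomial.C j i * p ^ i * (1 - p) ^ (j - i) else 0).
Proof. intros Hp. destruct (Nat.leb i j); [|lra].
  apply Rmult_le_pos; [apply Rmult_le_pos|]; [apply C_ge0| apply pow_le; lra | apply pow_le; lra]. Qed.

Lemma w_nonneg p N i : 0 < p < 1 -> 0 <= w N i p.
Proof. intros Hp. unfold w. apply cond_pos_sum. intros j. apply (w_term_nonneg p N). auto. Qed.

Lemma w_mono p n1 n2 i : 0 < p < 1 -> (n1 <= n2)%nat -> w n1 i p <= w n2 i p.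
Proof.
  intros Hp H. induction H as [|n2 H IH]. lra.
  apply Rle_trans with (1 := IH).
  change (w (S n2) i p) with (w n2 i p + (if Nat.leb i (S n2) then Binomial.C (S n2) i * p ^ i * (1 - p) ^ (S n2 - i) else 0)).
  pose proof (w_term_nonneg p n2 i (S n2) Hp). lra.
Qed.

Lemma sum_ext_zero (f : nat -> R) n1 n2 : (n1 <= n2)%nat ->
  (forall k, (n1 < k <= n2)%nat -> f k = 0) -> sum_f_R0 f n2 = sum_f_R0 f n1.
Proof.
  intros H. induction H as [|n2 H IH]; intros Hz. reflexivity.
  rewrite tech5, Hz by lia. rewrite IH. ring. intros; apply Hz; lia.
Qed.

Lemma sum_diff_bound (f : nat -> R) n1 n2 M : (n1 <= n2)%nat ->
  (forall j, (n1 < j <= n2)%nat -> f j <= M) ->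
  sum_f_R0 f n2 - sum_f_R0 f n1 <= INR (n2 - n1) * M.
Proof.
  intros H. induction H as [|n2 H IH]; intros Hb.
  - rewrite Nat.sub_diag. simpl. lra.
  - rewrite tech5. replace (S n2 - n1)%nat with (S (n2 - n1)) by lia. rewrite S_INR.
    assert (f (S n2) <= M) by (apply Hb; lia).
    assert (sum_f_R0 f n2 - sum_f_R0 f n1 <= INR (n2 - n1) * M) by (apply IH; intros; apply Hb; lia).
    lra.
Qed.

Lemma sum_le_ext (f g : nat -> R) n1 n2 : (n1 <= n2)%nat ->
  (forall k, (k <= n1)%nat -> f k <= g k) -> (forall k, (n1 < k <= n2)%nat -> 0 <= g k) ->
  sum_f_R0 f n1 <= sum_f_R0 g n2.
Proof.
  intros H. induction H as [|n2 H IH]; intros Hfg Hg.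
  - apply sum_Rle. auto.
  - rewrite tech5. assert (0 <= g (S n2)) by (apply Hg; lia).
    assert (sum_f_R0 f n1 <= sum_f_R0 g n2) by (apply IH; auto; intros; apply Hg; lia). lra.
Qed.

Lemma floor_spec x : IZR (floor x) <= x < IZR (floor x) + 1.
Proof. unfold floor. destruct (floor_ex x) as [z Hz]. simpl. exact Hz. Qed.

Lemma lim_sqrt_INR : is_lim_seq (fun n => sqrt (INR n)) p_infty.
Proof.
  apply (is_lim_comp_seq sqrt INR p_infty p_infty).
  - apply (is_lim_sqrt_p (fun x => x)). apply is_lim_id.
  - exists 0%nat. intros n _. discriminate.
  - apply is_lim_seq_INR.
Qed.

Lemma lim_s : is_lim_seq (fun n => ln (sqrt (INR n)) / sqrt (INR n)) 0.
Proof.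
  apply (is_lim_comp_seq (fun y => ln y / y) (fun n => sqrt (INR n)) p_infty 0).
  - apply is_lim_div_ln_p.
  - exists 0%nat. intros n _. discriminate.
  - apply lim_sqrt_INR.
Qed.

Lemma eps_bound n : (2 <= n)%nat -> 0 <= eps n / (INR n + 1) <= 2 * (ln (sqrt (INR n)) / sqrt (INR n)).
Proof.
  intros Hn. unfold eps. destruct (Nat.leb_spec 2 n); [|lia].
  assert (H2 : 2 <= INR n) by (apply (le_INR 2); lia).
  assert (Hs : 0 < sqrt (INR n)) by (apply sqrt_lt_R0; lra).
  assert (Hss : sqrt (INR n) * sqrt (INR n) = INR n) by (apply sqrt_sqrt; lra).
  assert (Hl : ln (INR n) = 2 * ln (sqrt (INR n))).
  { rewrite <- Hss at 1. rewrite ln_mult by lra. ring. }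
  assert (Hl0 : 0 <= ln (sqrt (INR n))).
  { rewrite <- ln_1. apply ln_le. lra. rewrite <- sqrt_1. apply sqrt_le_1; lra. }
  rewrite Hl. split.
  - apply Rmult_le_pos. apply Rmult_le_pos; lra. apply Rlt_le, Rinv_0_lt_compat; lra.
  - unfold Rdiv. 
    apply Rle_trans with (sqrt (INR n) * (2 * ln (sqrt (INR n))) * / (sqrt (INR n) * sqrt (INR n))).
    + apply Rmult_le_compat_l. apply Rmult_le_pos; lra.
      apply Rinv_le_contravar. nra. lra.
    + right. field. lra.
Qed.

Lemma lim_r : is_lim_seq (fun n => eps n / (INR n + 1)) 0.
Proof.
  apply (is_lim_seq_le_le_loc (fun _ => 0) _ (fun n => 2 * (ln (sqrt (INR n)) / sqrt (INR n)))).
  - exists 2%nat. intros n Hn. apply eps_bound. lia.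
  - apply is_lim_seq_const.
  - pose proof (is_lim_seq_scal_l _ 2 _ lim_s) as H. simpl in H. rewrite Rmult_0_r in H. exact H.
Qed.

Lemma div_le a b c : 0 < b -> a <= c * b -> a / b <= c.
Proof. intros Hb H. unfold Rdiv. apply (Rmult_le_reg_r b); auto.
  rewrite Rmult_assoc, Rinv_l by lra. lra. Qed.

Lemma eps_facts n : (3 <= n)%nat -> 0 < eps n /\ INR n <= eps n ^ 2.
Proof.
  intros Hn. unfold eps. destruct (Nat.leb_spec 2 n); [|lia].
  assert (H3 : 3 <= INR n) by (replace 3 with (INR 3) by (simpl; ring); apply le_INR; lia).
  assert (Hl : 1 <= ln (INR n)).
  { rewrite <- ln_exp with 1. apply ln_le. apply exp_pos. pose proof exp_le_3. lra. }
  assert (Hs : 0 < sqrt (INR n)) by (apply sqrt_lt_R0; lra).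
  assert (Hss : sqrt (INR n) * sqrt (INR n) = INR n) by (apply sqrt_sqrt; lra).
  split. nra.
  replace ((sqrt (INR n) * ln (INR n)) ^ 2) with ((sqrt (INR n) * sqrt (INR n)) * (ln (INR n) * ln (INR n))) by ring.
  rewrite Hss. assert (1 <= ln (INR n) * ln (INR n)) by nra. nra.
Qed.

Lemma core p a M n D :
  0 < p < 1 -> (forall k, 0 <= a k) -> (3 <= n)%nat -> (D + 1 <= n)%nat ->
  3 * eps n / p <= INR D ->
  (forall j, (n - D - 1 < j)%nat -> bern_transform p a j <= M) ->
  a_y p a n <= 2 * (INR (2 * D + 1) * M).
Proof.
  intros Hp Ha Hn HD HeD HM.
  destruct (eps_facts n Hn) as [He0 He2].
  set (e := eps n) in *.
  assert (HpD : 3 * e <= p * INR D).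
  { apply (Rmult_le_compat_l p) in HeD; [|lra]. unfold Rdiv in HeD.
    replace (p * (3 * e * / p)) with (3 * e) in HeD by (field; lra). exact HeD. }
  assert (HeD' : e <= INR D) by nra.
  assert (HnR : INR D + 1 <= INR n) by (rewrite <- S_INR; apply le_INR; lia).
  set (N := (n + D)%nat). set (n' := (n - D - 1)%nat).
  assert (HNR : INR (S N) = INR n + INR D + 1) by (unfold N; rewrite S_INR, plus_INR; ring).
  assert (Hn'R : INR (S n') = INR n - INR D) by (unfold n'; replace (S (n - D - 1)) with (n - D)%nat by lia;
     rewrite minus_INR by lia; ring).
  assert (Hwin : forall i, p * INR n - e < INR i -> INR i <= p * INR n + e - 1 ->
            w n i p <= 2 * (w N i p - w n' i p)).
  { intros i Hlo Hhi.
    assert (H1 : p * w n i p <= 1).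
    { rewrite pw. apply Rle_trans with (E p (S n) (fun _ => 1)); [|rewrite E_one; lra].
      apply E_mono. lra. intros k _. destruct (Nat.leb (S i) k); lra. }
    assert (H2 : 3/4 <= p * w N i p).
    { rewrite pw.
      rewrite (E_ext p (S N) _ (fun k => 1 * 1 + (-1) * (if Nat.leb (S i) k then 0 else 1))).
      2:{ intros k _. destruct (Nat.leb (S i) k); ring. }
      rewrite E_lin, E_one.
      assert (E p (S N) (fun k => if Nat.leb (S i) k then 0 else 1) <= INR (S N) / (4 * (2 * e) ^ 2)).
      { apply E_cheb; auto. lra.
        - intros k _. destruct (Nat.leb (S i) k); lra.
        - intros k _ Hk. destruct (Nat.leb_spec (S i) k) as [Hik|Hik]. lra.
          split. lra.
          assert (INR k <= INR i) by (apply le_INR; lia).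
          eapply Rle_trans; [|apply Rabs_maj2]. rewrite HNR. nra. }
      assert (INR (S N) / (4 * (2 * e) ^ 2) <= 1/4).
      { apply div_le. nra. rewrite HNR. nra. }
      lra. }
    assert (H3 : p * w n' i p <= 1/4).
    { rewrite pw.
      eapply Rle_trans. apply (E_cheb p (S n') _ (2 * e)); auto. lra.
      - intros k _. destruct (Nat.leb (S i) k); lra.
      - intros k _ Hk. destruct (Nat.leb_spec (S i) k) as [Hik|Hik]; [|lra].
        split. lra.
        assert (INR i + 1 <= INR k) by (rewrite <- S_INR; apply le_INR; lia).
        eapply Rle_trans; [|apply Rle_abs]. rewrite Hn'R. nra.
      - apply div_le. nra. rewrite Hn'R. nra. }
    apply (Rmult_le_reg_l p). lra. lra. }
  assert (Hlo : p * INR n - e < IZR (floor (p * INR n - e) + 1)).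
  { rewrite plus_IZR. pose proof (floor_spec (p * INR n - e)). lra. }
  assert (Hhi : IZR (floor (p * INR n + e) - 1) <= p * INR n + e - 1).
  { rewrite minus_IZR. pose proof (floor_spec (p * INR n + e)). lra. }
  assert (HhiN : (Z.to_nat (floor (p * INR n + e) - 1) <= N)%nat).
  { assert (IZR (floor (p * INR n + e) - 1) < IZR (Z.of_nat N) + 1).
    { rewrite <- INR_IZR_INZ. unfold N. rewrite plus_INR. nra. }
    rewrite <- plus_IZR in H. apply lt_IZR in H. lia. }
  unfold a_y. change (eps n) with e. cbv zeta.
  apply Rle_trans with (sum_f_R0 (fun i => (w N i p * a i - w n' i p * a i) * 2) N).
  { apply sum_le_ext. exact HhiN.
    - intros k _. pose proof (Ha k). pose proof (w_mono p n' N k Hp ltac:(unfold n', N; lia)).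
      destruct (_ && _)%bool eqn:Hc.
      + apply andb_prop in Hc as [Hc1 Hc2]. apply Z.leb_le in Hc1, Hc2.
        apply IZR_le in Hc1, Hc2. rewrite <- INR_IZR_INZ in Hc1, Hc2.
        assert (w n k p <= 2 * (w N k p - w n' k p)) by (apply Hwin; lra). nra.
      + nra.
    - intros k _. pose proof (Ha k). pose proof (w_mono p n' N k Hp ltac:(unfold n', N; lia)). nra. }
  rewrite <- scal_sum, minus_sum.
  rewrite (sum_ext_zero (fun i => w n' i p * a i) n' N) by (unfold n', N; lia || (intros k Hk; rewrite w_zero by lia; ring)).
  rewrite <- !T_id.
  assert (sum_f_R0 (bern_transform p a) N - sum_f_R0 (bern_transform p a) n' <= INR (N - n') * M).
  { apply sum_diff_bound. unfold n', N; lia. intros j Hj. apply HM. unfold n' in Hj. lia. }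
  replace (N - n')%nat with (2 * D + 1)%nat in H by (unfold N, n'; lia). lra.
Qed.
Lemma a_y_nonneg p a n : 0 < p < 1 -> (forall k, 0 <= a k) -> 0 <= a_y p a n.
Proof. intros Hp Ha. unfold a_y. cbv zeta. apply cond_pos_sum. intros k.
  destruct (_ && _)%bool. apply Rmult_le_pos. apply w_nonneg; auto. apply Ha. lra. Qed.

Theorem lemma8 (p : R) (a : nat -> R) (l : R) :
  0 < p < 1 ->
  (forall n, 0 <= a n) ->
  is_lim_seq (fun n => bern_transform p a n) l ->
  is_lim_seq (fun n => / (INR n + 1) * a_y p a n) 0.
Proof.
  intros Hp Ha Hl.
  set (M := Rabs l + 1).
  assert (HM0 : 0 <= M) by (unfold M; pose proof (Rabs_pos l); lra).
  apply is_lim_seq_spec in Hl.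
  destruct (Hl (mkposreal 1 Rlt_0_1)) as [N0 HN0]. simpl in HN0.
  pose proof lim_r as Hr. apply is_lim_seq_spec in Hr.
  assert (Hp24 : 0 < p / 24) by lra.
  destruct (Hr (mkposreal _ Hp24)) as [N1 HN1]. simpl in HN1.
  set (c := 2 * M * (6 / p + 3)).
  apply (is_lim_seq_le_le_loc (fun _ => 0) _ (fun n => c * (eps n / (INR n + 1)))).
  2: apply is_lim_seq_const.
  2:{ pose proof (is_lim_seq_scal_l _ c _ lim_r) as H. simpl in H. rewrite Rmult_0_r in H. exact H. }
  exists (N1 + 2 * N0 + 10)%nat. intros n Hn.
  assert (Hn3 : (3 <= n)%nat) by lia.
  destruct (eps_facts n Hn3) as [He0 He2].
  assert (HnR : INR (N1 + 2 * N0 + 10) <= INR n) by (apply le_INR; lia).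
  rewrite !plus_INR, mult_INR in HnR. simpl in HnR.
  pose proof (pos_INR N0). pose proof (pos_INR N1).
  assert (Hn1 : 0 < INR n + 1) by lra.
  assert (Hrn : eps n / (INR n + 1) < p / 24).
  { specialize (HN1 n ltac:(lia)). rewrite Rminus_0_r in HN1.
    eapply Rle_lt_trans; [apply Rle_abs|exact HN1]. }
  assert (Hen : eps n < p / 24 * (INR n + 1)).
  { unfold Rdiv in Hrn. apply (Rmult_lt_compat_r (INR n + 1)) in Hrn; [|lra].
    rewrite Rmult_assoc, Rinv_l in Hrn by lra. lra. }
  set (x := 3 * eps n / p).
  assert (Hx0 : 0 < x) by (unfold x; apply Rdiv_lt_0_compat; lra).
  assert (Hxn : x < (INR n + 1) / 8).
  { unfold x. apply (Rmult_lt_reg_r p). lra. unfold Rdiv. rewrite Rmult_assoc, Rinv_l by lra. nra. }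
  destruct (archimed x) as [Hup1 Hup2].
  set (D := Z.to_nat (up x)).
  assert (HDR : INR D = IZR (up x)).
  { unfold D. rewrite INR_IZR_INZ. rewrite Z2Nat.id. reflexivity.
    apply le_IZR. lra. }
  assert (HD1 : (D + N0 + 1 < n)%nat).
  { apply INR_lt. rewrite !plus_INR, HDR. simpl. lra. }
  pose proof (core p a M n D Hp Ha Hn3 ltac:(lia) ltac:(rewrite HDR; fold x; lra)) as Hc.
  assert (Hc' : a_y p a n <= 2 * (INR (2 * D + 1) * M)).
  { apply Hc. intros j Hj. specialize (HN0 j ltac:(lia)).
    unfold M. pose proof (Rle_abs (bern_transform p a j - l)). pose proof (Rle_abs l). lra. }
  clear Hc.
  rewrite plus_INR, mult_INR, HDR in Hc'. simpl in Hc'.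
  assert (He1 : 1 <= eps n).
  { assert (3 <= INR n) by lra. nra. }
  assert (Hbd : (2 * IZR (up x) + 1) <= (6 / p + 3) * eps n).
  { assert (Hx2 : 6 / p * eps n = 2 * x) by (unfold x; field; lra).
    assert (3 <= 3 * eps n) by lra. rewrite Rmult_plus_distr_r, Hx2. lra. }
  split.
  - apply Rmult_le_pos. apply Rlt_le, Rinv_0_lt_compat; lra. apply a_y_nonneg; auto.
  - assert (a_y p a n <= c * eps n).
    { unfold c. apply Rle_trans with (1 := Hc').
      replace (2 * M * (6 / p + 3) * eps n) with (2 * (((6 / p + 3) * eps n) * M)) by ring.
      apply Rmult_le_compat_l. lra. apply Rmult_le_compat_r; lra. }
    unfold Rdiv. replace (c * (eps n * / (INR n + 1))) with (/ (INR n + 1) * (c * eps n)) by ring.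
    apply Rmult_le_compat_l. apply Rlt_le, Rinv_0_lt_compat; lra. lra.
Qed.
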